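(* Let $n\ge 2$, let $T=\{1,\dots,n\}$ and let $\mathcal T$ be a topology on $T$. Fix an integer $k\ge 1$ and let $X_{k-1}$ be the set of old points at stage $k$. For each $i\in\{1,\dots,n-1\}\setminus X_{k-1}$ let $N_i$ be the number of new open $k$-sets of the quotient space $Q^{i}$. Then there is an integer $s\ge 0$ (depending on $k$) such that $N_i\in\{s,s+1,s+2\}$ for every $i\in\{1,\dots,n-1\}\setminus X_{k-1}$.
   Context: For $\alpha\in T$, $\alpha^{*}$ denotes the smallest open set of $\mathcal T$ containing $\alpha$. For an integer $m\ge 0$, an $m$-system is an open set $P$ of $\mathcal T$ such that $P\setminus\{n\}$ has exactly $m$ points; upper if $n\notin P$, lower if $n\in P$. At stage $k$, a point $\alpha\neq n$ is old if $\alpha^{*}$ is an $m$-system for some $m<k$, and new if $\alpha^{*}$ is a $k$-system; $X_{k-1}$ is the set of old points. A $k$-system is new if it contains a point $p\neq n$ not contained in any $m$-system with $m\le k-1$. For $i\in\{1,\dots,n-1\}$, $Q^{i}$ is the quotient space obtained by identifying $i$ and $n$: its underlying set is $T(i,n)=\{\{z\}: z\in T\setminus\{i,n\}\}\cup\{\{i,n\}\}$ with natural map $f_i:T\to T(i,n)$, and a set $V\subseteq T(i,n)$ is open iff $f_i^{-1}(V)\in\mathcal T$. The spaces $Q^{i}$ with $i\notin X_{k-1}$ are called new quotient spaces (at stage $k$). A new open $k$-set of $Q^{i}$ is an open set $V$ of $Q^{i}$ with exactly $k$ elements such that $f_i^{-1}(V)$ is a new $k$-system of $\mathcal T$. *)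

(* Defs.v *)
From mathcomp Require Import all_boot.
Set Implicit Arguments. Unset Strict Implicit. Unset Printing Implicit Defensive.

Section Defs.
Variable T : finType.
(* tau : the family of open sets; nT : the distinguished point "n" *)
Variable tau : {set {set T}}.
Variable nT : T.

Definition is_topology : Prop :=
  [/\ set0 \in tau, setT \in tau,
      (forall U V, U \in tau -> V \in tau -> U :|: V \in tau)
    & (forall U V, U \in tau -> V \in tau -> U :&: V \in tau)].

Definition minopen (a : T) : {set T} := \bigcap_(U in tau | a \in U) U.

Definition is_msystem (m : nat) (P : {set T}) : bool :=
  (P \in tau) && (#|P :\ nT| == m).

Definition old_points (k : nat) : {set T} :=
  [set a | (a != nT) && [exists m : 'I_k, is_msystem m (minopen a)]].

Definition new_ksystem (k : nat) (P : {set T}) : bool :=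
  is_msystem k P &&
  [exists p in P, (p != nT) &&
     ~~ [exists m : 'I_k.-1.+1, exists Q : {set T}, is_msystem m Q && (p \in Q)]].

(* quotient Q^i identifying i and n *)
Definition qcarrier (i : T) : {set {set T}} :=
  [set [set z] | z in ~: [set i; nT]] :|: [set [set i; nT]].

Definition qmap (i : T) (z : T) : {set T} :=
  if z \in [set i; nT] then [set i; nT] else [set z].

Definition qopen (i : T) (V : {set {set T}}) : bool :=
  (V \subset qcarrier i) && (qmap i @^-1: V \in tau).

Definition num_new_open_ksets (k : nat) (i : T) : nat :=
  #|[set V : {set {set T}} | [&& qopen i V, #|V| == k &
                                 new_ksystem k (qmap i @^-1: V)]]|.
End Defs.

(* Main.v *)
Require Import Defs.
From mathcomp Require Import all_boot.

Lemma minopen_open {T : finType} (tau : {set {set T}}) (h : is_topology tau) a :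
  minopen tau a \in tau.
Proof.
case: h => h0 hT hU hI; rewrite /minopen; apply: (big_ind (fun X => X \in tau)) => //.
by move=> U /andP[].
Qed.

Lemma minopen_sub {T : finType} (tau : {set {set T}}) a P :
  P \in tau -> a \in P -> minopen tau a \subset P.
Proof. by move=> hP haP; rewrite /minopen; apply: bigcap_inf; rewrite hP haP. Qed.

Lemma uniq_sys {T : finType} (tau : {set {set T}}) (h : is_topology tau)
  (nT i : T) k P Q : i != nT -> i \notin old_points tau nT k ->
  P \in tau -> Q \in tau -> #|P :\ nT| = k -> #|Q :\ nT| = k ->
  i \in P -> i \in Q -> (nT \in P) = (nT \in Q) -> P = Q.
Proof.
move=> hin hold hP hQ cP cQ iP iQ nPQ.
set M := minopen tau i.
have MO : M \in tau := @minopen_open _ tau h i.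
have Mk : k <= #|M :\ nT|.
  rewrite leqNgt; apply/negP => lt; move: hold; rewrite inE hin /=.
  move/negP; apply; apply/existsP; exists (Ordinal lt).
  by rewrite /is_msystem MO /= eqxx.
have eqM : forall R, R \in tau -> #|R :\ nT| = k -> i \in R -> R :\ nT = M :\ nT.
  move=> R hR cR iR; apply/esym/eqP; rewrite eqEcard cR Mk andbT.
  by apply: setSD; apply: minopen_sub.
apply/setP => z; case: (z =P nT) => [->|/eqP hz]; first by [].
have e := etrans (eqM P hP cP iP) (esym (eqM Q hQ cQ iQ)).
have := congr1 (fun X : {set T} => z \in X) e.
by rewrite /= !inE hz.
Qed.

Lemma qmapD {T : finType} (i nT z : T) : i != nT -> z != nT ->
  qmap nT i z :\ nT = [set z].
Proof.
move=> hi hz; rewrite /qmap in_set2; have [->|zi] := eqVneq z i.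
  rewrite ?orbT /=; apply/setP => y; rewrite !inE.
  case: (y =P nT) => [->|_] /=; first by rewrite eq_sym (negbTE hi).
  by rewrite ?orbF.
rewrite (negbTE hz) /=; apply/setP => y.
rewrite !inE; case: (y =P z) => [->|] /=; by rewrite ?hz ?andbF.
Qed.

Lemma qmap_self {T : finType} (i nT z : T) : z \in qmap nT i z.
Proof. by rewrite /qmap; case: ifP; rewrite ?inE ?eqxx. Qed.

Lemma qmap_inj {T : finType} (i nT : T) : i != nT ->
  {in [pred z | z != nT] &, injective (qmap nT i)}.
Proof.
move=> hi z w hz hw e; apply: set1_inj.
by rewrite -(@qmapD _ i nT z hi hz) -(@qmapD _ i nT w hi hw) e.
Qed.

Lemma qimage {T : finType} (i nT : T) (V : {set {set T}}) : i != nT ->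
  V \subset qcarrier nT i -> qmap nT i @: ((qmap nT i @^-1: V) :\ nT) = V.
Proof.
move=> hi hV; apply/setP => v; apply/imsetP/idP.
  by case=> z; rewrite !inE => /andP[_ hz] ->.
move=> hv; have := subsetP hV v hv; rewrite /qcarrier !inE.
case/orP => [/imsetP[z] | /eqP ev].
  rewrite !inE negb_or => /andP[zi zn] ev; exists z; last first.
    by rewrite ev /qmap !inE (negbTE zi) (negbTE zn).
  rewrite !inE ?zn ?zi /= /qmap !inE (negbTE zi) (negbTE zn) /=.
  by rewrite -ev.
have e2 : qmap nT i i = v.
  by rewrite ev /qmap in_set2 eqxx ?orbT.
exists i; last by rewrite e2.
by rewrite !inE hi /= e2.
Qed.

Lemma qcard {T : finType} (i nT : T) (V : {set {set T}}) : i != nT ->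
  V \subset qcarrier nT i -> #|(qmap nT i @^-1: V) :\ nT| = #|V|.
Proof.
move=> hi hV; rewrite -{2}(qimage _ _ _ hi hV) card_in_imset //.
move=> z w; rewrite !inE => /andP[hz _] /andP[hw _].
by apply: (qmap_inj _ _ hi); rewrite inE.
Qed.

Lemma qsat {T : finType} (i nT : T) (V : {set {set T}}) :
  (i \in qmap nT i @^-1: V) = (nT \in qmap nT i @^-1: V).
Proof. by rewrite !inE /qmap !in_set2 !eqxx ?orbT. Qed.

Lemma qback {T : finType} (i nT : T) (P : {set T}) :
  (i \in P) = (nT \in P) ->
  (qmap nT i @: P \subset qcarrier nT i) /\ (qmap nT i @^-1: (qmap nT i @: P) = P).
Proof.
move=> sat; split.
  apply/subsetP => v /imsetP[z _ ->]; rewrite /qcarrier /qmap.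
  case: ifP => hz; rewrite in_setU; apply/orP; [right | left].
    by rewrite in_set1.
  by apply/imsetP; exists z; rewrite // in_setC hz.
apply/setP => z; rewrite inE; apply/imsetP/idP; last by move=> hz; exists z.
case=> w wP e.
have := qmap_self i nT w; rewrite -e /qmap.
case: ifP => hz.
  move: hz; rewrite !in_set2 => hz hw.
  have iP : i \in P.
    by case/orP: hw => /eqP ew; move: wP; rewrite ew ?sat.
  by case/orP: hz => /eqP ->; rewrite -?sat.
by rewrite in_set1 => /eqP <-.
Qed.

Lemma count_eq {T : finType} (tau : {set {set T}}) (nT i : T) k : i != nT ->
  num_new_open_ksets tau nT k i =
  #|[set P : {set T} | new_ksystem tau nT k P && ((i \in P) == (nT \in P))]|.
Proof.
move=> hi; rewrite /num_new_open_ksets.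
set S := [set V | _].
rewrite -(card_in_imset (f := fun V : {set {set T}} => qmap nT i @^-1: V) (D := S)); last first.
  move=> V1 V2; rewrite !inE => /andP[/andP[h1 _] _] /andP[/andP[h2 _] _] e.
  by rewrite -(qimage _ _ _ hi h1) -(qimage _ _ _ hi h2) e.
apply: eq_card => P; apply/idP/idP.
  move=> /imsetP[V]; rewrite /S inE => /andP[_ /andP[_ hn]] ->.
  by rewrite inE hn qsat eqxx.
rewrite inE => /andP[hn /eqP sat].
have [hsub hpre] := qback i nT P sat.
apply/imsetP; exists (qmap nT i @: P); last by rewrite hpre.
have hn' := hn; move: hn' => /andP[/andP[hP /eqP cP] _].
rewrite inE /qopen hsub hpre hP hn /= andbT.
by rewrite -(qcard _ _ _ hi hsub) hpre cP.
Qed.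

Theorem theorem2 (m : nat) (hm : 1 <= m) (tau : {set {set 'I_m.+1}})
  (htop : is_topology tau) (k : nat) (hk : 1 <= k) :
  exists s : nat, forall i : 'I_m.+1,
    i != ord_max -> i \notin old_points tau ord_max k ->
    num_new_open_ksets tau ord_max k i \in [:: s; s.+1; s.+2].
Proof.
set nT : 'I_m.+1 := ord_max.
set Up := [set P : {set 'I_m.+1} | new_ksystem tau nT k P && (nT \notin P)].
exists #|Up|.-1 => i hi hold.
rewrite count_eq //.
set B := [set P : {set 'I_m.+1} | _].
set L := [set P : {set 'I_m.+1} | nT \in P].
set I := [set P : {set 'I_m.+1} | i \in P].
have e1 := cardsID L B; have e2 := cardsID I Up.
have eD : B :\: L = Up :\: I.
  apply/setP => P; rewrite !inE.
  by case: (nT \in P); case: (i \in P); rewrite /= ?andbT ?andbF.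
have c1 : #|B :&: L| <= 1.
  apply/card_le1_eqP => P Q; rewrite !inE.
  move=> /andP[/andP[hP /eqP satP] nP] /andP[/andP[hQ /eqP satQ] nQ].
  move: hP hQ => /andP[/andP[oP /eqP cP] _] /andP[/andP[oQ /eqP cQ] _].
  apply: (uniq_sys _ htop nT i k _ _ hi hold oQ oP cQ cP); by rewrite ?satP ?satQ ?nP ?nQ.
have c2 : #|Up :&: I| <= 1.
  apply/card_le1_eqP => P Q; rewrite !inE.
  move=> /andP[/andP[hP nP] iP] /andP[/andP[hQ nQ] iQ].
  move: hP hQ => /andP[/andP[oP /eqP cP] _] /andP[/andP[oQ /eqP cQ] _].
  apply: (uniq_sys _ htop nT i k _ _ hi hold oQ oP cQ cP iQ iP).
  by rewrite (negbTE nP) (negbTE nQ).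
rewrite eD in e1; rewrite -e1 -e2.
move: c1 c2; set x := #|Up :\: I|; set y := #|B :&: L|; set z := #|Up :&: I|.
rewrite !inE.
case: y => [|[|y]] //; case: z => [|[|z]] //; case: x => [|x] //= _ _;
  rewrite ?add0n ?addn0 ?add1n ?addn1 ?addSn ?addnS /= ?eqxx ?orbT //.
Qed.
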